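(* Let $q\ge 7$ and $s\in[1,7]$ be integers, $C$ a finite set with $|C|=2q+s$, and $M\in\mathcal M(6,q,C)$. If the maximum degree of the graph $G$ associated with $M$ is at least $4$, then $q\le 40-5s$.
   Context: $\mathcal M(6,q,C)$ is the set of $6\times q$ matrices $M$ with entries from $C$ such that each row has $q$ pairwise distinct entries, each column has $6$ pairwise distinct entries, and every pair of distinct colours of $C$ appears together in some row or some column of $M$. The frequency of a colour is the number of entries of $M$ equal to it. For rows $i\ne k$, $r(i,k)$ is the number of colours of frequency exactly $2$ appearing in both row $i$ and row $k$. The graph $G$ associated with $M$ has vertex set $\{1,\dots,6\}$ (the rows), with $\{i,k\}$ an edge iff $r(i,k)\ge 1$. *)

(* Defs.v *)
From mathcomp Require Import all_boot.
Set Implicit Arguments. Unset Strict Implicit. Unset Printing Implicit Defensive.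

Definition mat (q : nat) (C : finType) := {ffun 'I_6 -> {ffun 'I_q -> C}}.

Section M.
Variables (q : nat) (C : finType) (M : mat q C).

Definition rows_distinct := forall i : 'I_6, injective (M i).
Definition cols_distinct := forall j : 'I_q, injective (fun i : 'I_6 => M i j).
Definition in_row (c : C) (i : 'I_6) := [exists j : 'I_q, M i j == c].
Definition in_col (c : C) (j : 'I_q) := [exists i : 'I_6, M i j == c].
Definition pairs_covered := forall a b : C, a != b ->
  (exists i : 'I_6, in_row a i && in_row b i) \/
  (exists j : 'I_q, in_col a j && in_col b j).

Definition in_M := [/\ rows_distinct, cols_distinct & pairs_covered].

Definition freq (c : C) : nat := #|[set ij : 'I_6 * 'I_q | M ij.1 ij.2 == c]|.

Definition r (i k : 'I_6) : nat :=
  #|[set c : C | (freq c == 2) && in_row c i && in_row c k]|.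

Definition Gadj (i k : 'I_6) : bool := (i != k) && (1 <= r i k).
Definition Gdeg (i : 'I_6) : nat := #|[set k : 'I_6 | Gadj i k]|.
Definition Gmaxdeg : nat := \max_(i : 'I_6) Gdeg i.
End M.

(* Main.v *)
Require Import Defs.
From mathcomp Require Import all_boot.
From mathcomp Require Import zify.
Set Implicit Arguments. Unset Strict Implicit.

Lemma card_bigcup_le (I T : finType) (P : pred I) (F : I -> {set T}) :
  #|\bigcup_(k | P k) F k| <= \sum_(k | P k) #|F k|.
Proof.
elim/big_rec2: _ => [|k A n _ IH]; first by rewrite cards0.
rewrite cardsU; apply: leq_trans (leq_subr _ _) _; by rewrite leq_add2l.
Qed.

Section Work.
Variables (q s : nat) (C : finType) (M : mat q C).
Hypothesis Hq : 7 <= q.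
Hypothesis Hs : 1 <= s <= 7.
Hypothesis HC : #|C| = 2 * q + s.
Hypothesis HM : in_M M.

Definition Rw (i : 'I_6) := [set c | in_row M c i].
Definition Rs (c : C) := [set r | in_row M c r].

Lemma rinj i : injective (M i).
Proof. by case: HM. Qed.

Lemma cov : pairs_covered M.
Proof. by case: HM. Qed.

Lemma card_Rw i : #|Rw i| = q.
Proof.
have -> : Rw i = [set M i j | j in 'I_q].
  apply/setP => c; rewrite !inE; apply/existsP/imsetP.
    by case=> j /eqP <-; exists j.
  by case=> j _ ->; exists j.
by rewrite card_imset ?card_ord //; apply: rinj.
Qed.

Lemma freqE c : freq M c = #|Rs c|.
Proof.
rewrite /freq.
set S := [set ij : 'I_6 * 'I_q | M ij.1 ij.2 == c].
have -> : Rs c = [set ij.1 | ij in S].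
  apply/setP => r; rewrite !inE; apply/existsP/imsetP.
    by case=> j Hj; exists (r, j); rewrite ?inE.
  case=> [[r' j]] /=; rewrite inE /= => Hj ->; by exists j.
rewrite card_in_imset // => [[r1 j1]] [r2 j2]; rewrite !inE /= => /eqP H1 /eqP H2 Er.
subst r2; congr pair; apply: (@rinj r1); by rewrite H1 H2.
Qed.

Lemma in_RwP c i : reflect (exists j, M i j = c) (c \in Rw i).
Proof. rewrite inE; apply: (iffP existsP) => -[j Hj]; exists j; exact/eqP. Qed.

Lemma other_row c i : c \in Rw i -> exists k, k != i /\ c \in Rw k.
Proof.
move=> Hc.
case: (boolP [exists k, (k != i) && (c \in Rw k)]).
  by case/existsP => k /andP [H1 H2]; exists k.
rewrite negb_exists => /forallP Hno.
have onlyi : forall r, c \in Rw r -> r = i.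
  move=> r Hr; apply/eqP; move: (Hno r); rewrite Hr andbT; by rewrite negbK.
case/in_RwP: Hc => a Ha.
have sub : [set: C] \subset Rw i :|: [set M r a | r in 'I_6].
  apply/subsetP => y _; case: (eqVneq y c) => [->|Hyc].
    by rewrite inE; apply/orP; left; apply/in_RwP; exists a.
  case: (cov Hyc) => [[r /andP [Hy Hcr]]|[j /andP [Hy Hcj]]].
    have Er := onlyi r (ltac:(by rewrite inE)). subst r.
    by rewrite inE; apply/orP; left; rewrite inE.
  case/existsP: Hcj => r /eqP Hr.
  have Er : r = i by apply: onlyi; apply/in_RwP; exists j.
  subst r; have Ej : j = a by apply: (@rinj i); rewrite Hr Ha.
  subst j; case/existsP: Hy => r' /eqP Hr'.
  by rewrite inE; apply/orP; right; apply/imsetP; exists r'.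
have := subset_leq_card sub; rewrite cardsT HC.
have := leq_card_setU (Rw i) [set M r a | r in 'I_6].
move=> [H1 _]; have H2 := leq_imset_card (fun r => M r a) 'I_6.
rewrite card_Rw card_ord in H1 H2 *.
move=> H3; have H4 := leq_trans H3 H1; have H5 : 2 * q + s <= q + 6 by apply: (leq_trans H4); rewrite leq_add2l. exfalso; lia.
Qed.

Lemma pair_bound i k c : i != k -> freq M c = 2 -> c \in Rw i -> c \in Rw k ->
  #|Rw i :&: Rw k| + s <= 8.
Proof.
move=> Hik Hf Hci Hck.
have ERs : Rs c = [set i; k].
  apply/esym/eqP; rewrite eqEcard; apply/andP; split.
    by apply/subsetP => r /set2P [] ->; rewrite inE; [move: Hci|move: Hck]; rewrite inE.
  by rewrite -freqE Hf cards2 Hik.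
have inRs r : c \in Rw r -> r = i \/ r = k.
  move=> H; have : r \in Rs c by move: H; rewrite !inE.
  by rewrite ERs !inE => /orP [] /eqP ->; [left|right].
case/in_RwP: Hci => a Ha; case/in_RwP: Hck => b Hb.
set T' := ~: [set i; k].
have cT : #|T'| = 4.
  have := cardsC [set i; k]; rewrite cards2 Hik card_ord; rewrite -/T'; lia.
set D := [set M r a | r in T'] :|: [set M r b | r in T'].
have cD : #|D| <= 8.
  have [H1 _] := leq_card_setU [set M r a | r in T'] [set M r b | r in T'].
  have H2 := leq_imset_card (fun r => M r a) T'.
  have H3 := leq_imset_card (fun r => M r b) T'.
  rewrite cT in H2 H3; rewrite /D; lia.
have colcase r' j : (j = a \/ j = b) -> M r' j \in Rw i :|: Rw k :|: D.
  move=> Hj.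
  case: (boolP (r' \in T')) => HT.
    rewrite !inE; apply/orP; right; apply/orP.
    by case: Hj => ->; [left|right]; apply/imsetP; exists r'.
  move: HT; rewrite inE negbK => /set2P [] ->;
   apply/setUP; left; apply/setUP; [left|right]; apply/in_RwP; by exists j.
have sub : [set: C] \subset Rw i :|: Rw k :|: D.
  apply/subsetP => y _; case: (eqVneq y c) => [->|Hyc].
    by apply/setUP; left; apply/setUP; left; apply/in_RwP; exists a.
  case: (cov Hyc) => [[r /andP [Hy Hcr]]|[j /andP [Hy Hcj]]].
    have Hy' : y \in Rw r by rewrite inE.
    case: (inRs r (ltac:(by rewrite inE))) => Er; subst r;
      apply/setUP; left; apply/setUP; by [left|right].
  case/existsP: Hcj => r /eqP Hr.
  case/existsP: Hy => r' /eqP <-.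
  apply: colcase.
  case: (inRs r (ltac:(by apply/in_RwP; exists j))) => Er; subst r.
    by left; apply: (@rinj i); rewrite Hr Ha.
  by right; apply: (@rinj k); rewrite Hr Hb.
have := subset_leq_card sub; rewrite cardsT HC.
have [H1 _] := leq_card_setU (Rw i :|: Rw k) D.
have H2 := cardsUI (Rw i) (Rw k).
rewrite !card_Rw in H2.
move=> H3; lia.
Qed.

End Work.

Theorem claim5 (q s : nat) (C : finType) (M : mat q C) :
  7 <= q -> 1 <= s <= 7 -> #|C| = 2 * q + s ->
  in_M M -> 4 <= Gmaxdeg M ->
  q <= 40 - 5 * s.
Proof.
move=> Hq Hs HC HM Hmax.
have [i Hi] : exists i, 4 <= Gdeg M i.
  move: Hmax; rewrite /Gmaxdeg.
  have [i0 ->] := @eq_bigmax 'I_6 (Gdeg M) (ltac:(by rewrite card_ord)).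
  by move=> H; exists i0.
set N := [set k | Gadj M i k].
have HN : #|N| = Gdeg M i by [].
have NsubC : N \subset [set~ i].
  by apply/subsetP => k; rewrite !inE /Gadj eq_sym => /andP [].
have cN5 : #|N| <= 5.
  by have := subset_leq_card NsubC; rewrite cardsC1 card_ord.
have cover : Rw M i \subset \bigcup_(k in N) (Rw M i :&: Rw M k).
  apply/subsetP => c Hc.
  have [k [Hki Hck]] := other_row Hq Hs HC HM Hc.
  case: (boolP (k \in N)) => HkN.
    by apply/bigcupP; exists k => //; rewrite inE Hc Hck.
  case: (boolP [exists k', [&& k' != i, k' != k & c \in Rw M k']]).
    case/existsP => k' /and3P [H1 H2 H3].
    case: (boolP (k' \in N)) => Hk'N.
      by apply/bigcupP; exists k' => //; rewrite inE Hc H3.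
    exfalso.
    have sub : N :|: [set k; k'] \subset [set~ i].
      rewrite subUset NsubC; apply/subsetP => x; rewrite !inE.
      by case/orP => /eqP ->; [rewrite Hki | rewrite H1].
    have dis : N :&: [set k; k'] = set0.
      apply/setP => x; rewrite in_setI in_set0 in_set2; apply/negbTE.
      apply/andP => -[Hx /orP [] /eqP Ex]; subst x;
        [by rewrite Hx in HkN | by rewrite Hx in Hk'N].
    have := subset_leq_card sub; rewrite cardsC1 card_ord.
    have := cardsUI N [set k; k']; rewrite dis cards0 cards2 eq_sym H2.
    lia.
  rewrite negb_exists => /forallP Hno.
  exfalso; move: HkN; rewrite inE /Gadj eq_sym Hki /= => /negP; apply.
  rewrite card_gt0; apply/set0Pn; exists c.
  have Rsc : Rs M c = [set i; k].
    apply/setP => r; rewrite in_set2 inE.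
    case: (eqVneq r i) => [->|Hri]; first by move: Hc; rewrite inE.
    case: (eqVneq r k) => [->|Hrk]; first by move: Hck; rewrite inE.
    by move: (Hno r); rewrite Hri Hrk /= inE => /negbTE.
  rewrite inE (freqE HM) Rsc cards2 (eq_sym i k) Hki /=.
  by move: Hc Hck; rewrite !inE => -> ->.
have := subset_leq_card cover; rewrite card_Rw; last by case: HM.
move=> H1; apply: (leq_trans H1); apply: (leq_trans (card_bigcup_le _ _)).
apply: (@leq_trans (\sum_(k in N) (8 - s))).
  apply: leq_sum => k; rewrite inE /Gadj => /andP [Hik].
  rewrite card_gt0 => /set0Pn [c]; rewrite !inE => /andP [/andP [/eqP Hf Hci] Hck].
  have := pair_bound Hq Hs HC HM Hik Hf (ltac:(by rewrite inE)) (ltac:(by rewrite inE)); lia.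
rewrite sum_nat_const; apply: leq_trans (leq_mul cN5 (leqnn _)) _; lia.
Qed.
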